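(* Let $n\ge 1$ and let $\sigma,\tau\in S_n$. For every $i\in[n]$ the following hold: (i) $\sigma(i)\le i+c_i(\sigma)$; (ii) $c_i(\sigma\tau)\le c_i(\tau)+c_{\tau(i)}(\sigma)$; (iii) the map $\sigma^{-1}$ restricts to a bijection from $A(\sigma^{-1})_{\sigma(i)}$ onto $A(\sigma)_i$; in particular $i+c_i(\sigma)=\sigma(i)+c_{\sigma(i)}(\sigma^{-1})$.
   Context: $[n]=\{1,\dots,n\}$ and $S_n$ is the group of permutations of $[n]$. Composition is $(\sigma\tau)(i)=\sigma(\tau(i))$. For $\sigma\in S_n$ and $i\in[n]$ let $C(\sigma)_i=\{j\in[n]: j>i \text{ and } \sigma(j)<\sigma(i)\}$, $c_i(\sigma)=|C(\sigma)_i|$ (so $[c_1(\sigma),\dots,c_n(\sigma)]$ is the Lehmer code of $\sigma$), and $A(\sigma)_i=[i]\cup C(\sigma)_i$. *)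

(* Defs.v *)
(* [n] = {1..n} is modelled by 'I_n = {0..n-1} via the
   order-preserving shift k |-> k-1; all notions below only use the order. *)
From mathcomp Require Import all_boot all_order all_fingroup.
Set Implicit Arguments. Unset Strict Implicit. Unset Printing Implicit Defensive.

(* Paper's composition: (sigma tau)(i) = sigma(tau(i)).  MathComp's perm
   product satisfies (s * t) x = t (s x), hence the swap. *)
Definition permcomp n (s t : {perm 'I_n}) : {perm 'I_n} := (t * s)%g.

Definition Cset n (s : {perm 'I_n}) (i : 'I_n) : {set 'I_n} :=
  [set j : 'I_n | (i < j) && (s j < s i)].

Definition lehmer n (s : {perm 'I_n}) (i : 'I_n) : nat := #|Cset s i|.

Definition Aset n (s : {perm 'I_n}) (i : 'I_n) : {set 'I_n} :=
  [set j : 'I_n | j <= i] :|: Cset s i.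

(* Main.v *)
Require Import Defs.
From mathcomp Require Import all_boot all_order all_fingroup.

Lemma card_le n (i : 'I_n) : #|[set j : 'I_n | j <= i]| = i.+1.
Proof.
have -> : [set j : 'I_n | j <= i] = widen_ord (ltn_ord i) @: [set: 'I_i.+1].
  apply/setP => j; rewrite !inE; apply/idP/imsetP.
    by move=> hj; exists (Ordinal (hj : j < i.+1)) => //; apply/val_inj.
  by case=> k _ ->; rewrite /= -ltnS.
rewrite card_imset ?cardsT ?card_ord //.
by move=> a b /(congr1 val) /= h; apply/val_inj.
Qed.

Lemma card_Aset n (s : {perm 'I_n}) (i : 'I_n) : #|Aset s i| = i.+1 + lehmer s i.
Proof.
rewrite /Aset cardsU card_le /lehmer.
suff -> : [set j : 'I_n | j <= i] :&: Cset s i = set0 by rewrite cards0 subn0.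
apply/setP => j; rewrite !inE; apply/negbTE; apply/negP => /andP [h1 /andP [h2 _]].
by move: (leq_trans h2 h1); rewrite ltnn.
Qed.

Lemma Aset_mem n (s : {perm 'I_n}) (i j : 'I_n) :
  (j \in Aset s i) = (j == i) || ((j < i) || (s j < s i)).
Proof.
rewrite /Aset !inE leq_eqVlt.
have [h|h] := boolP (j == i).
  by rewrite (eqP h) eqxx ltnn.
have hv : (nat_of_ord j == nat_of_ord i) = false.
  by apply/negbTE; apply: contra h => /eqP hh; apply/eqP/val_inj.
rewrite hv /=; case: (ltnP i j) => hij /=.
  by [].
have ji : j < i by rewrite ltn_neqAle hij andbT; exact: h.
by rewrite ji.
Qed.


Theorem lemma3p1 (n : nat) (hn : 0 < n) (sigma tau : {perm 'I_n}) (i : 'I_n) :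
  [/\ sigma i <= i + lehmer sigma i,
      lehmer (permcomp sigma tau) i <= lehmer tau i + lehmer sigma (tau i),
      {in Aset (sigma^-1)%g (sigma i), injective (sigma^-1)%g}
        /\ [set (sigma^-1)%g x | x in Aset (sigma^-1)%g (sigma i)] = Aset sigma i
    & i + lehmer sigma i = sigma i + lehmer (sigma^-1)%g (sigma i)].
Proof.
have img : [set (sigma^-1)%g x | x in Aset (sigma^-1)%g (sigma i)] = Aset sigma i.
  apply/setP => j; apply/imsetP/idP.
    case=> x hx ->; rewrite Aset_mem; rewrite Aset_mem permK in hx.
    case/orP: hx => [/eqP ->|]; first by rewrite permK eqxx.
    by case/orP => h; rewrite permKV h !orbT.
  move=> hj; exists (sigma j); last by rewrite permK.
  rewrite Aset_mem permK; rewrite Aset_mem in hj.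
  case/orP: hj => [/eqP ->|]; first by rewrite eqxx.
  by case/orP => h; rewrite ?permK h !orbT.
have inj : {in Aset (sigma^-1)%g (sigma i), injective (sigma^-1)%g}.
  by move=> x _ y; apply: perm_inj.
split => //.
- have sub : [set j | sigma j <= sigma i] \subset Aset sigma i.
    apply/subsetP => j; rewrite inE Aset_mem leq_eqVlt.
    case/orP => [/eqP h|->]; last by rewrite !orbT.
    by rewrite (perm_inj (val_inj h)) eqxx.
  have ce : #|[set j | sigma j <= sigma i]| = (sigma i).+1.
    have -> : [set j | sigma j <= sigma i] = (sigma^-1)%g @: [set k : 'I_n | k <= sigma i].
      apply/setP => j; rewrite inE; apply/idP/imsetP.
        by move=> h; exists (sigma j); rewrite ?inE ?permK.
      by case=> k; rewrite inE => h ->; rewrite permKV.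
    by rewrite card_imset ?card_le //; apply: perm_inj.
  by move: (subset_leq_card sub); rewrite ce card_Aset.
- rewrite /lehmer.
  have sub : Cset (permcomp sigma tau) i \subset
      Cset tau i :|: [set j | tau j \in Cset sigma (tau i)].
    apply/subsetP => j; rewrite !inE /permcomp !permM => /andP [hij hs].
    case: (ltngtP (tau j) (tau i)) => h; first by rewrite hij.
      by rewrite hs orbT.
    have e : j = i by apply: (@perm_inj _ tau); apply/val_inj.
    by move: hij; rewrite e ltnn.
  apply: (leq_trans (subset_leq_card sub)); apply: (leq_trans (leq_card_setU _ _)).
  rewrite leq_add2l.
  have -> : [set j | tau j \in Cset sigma (tau i)] = tau @^-1: Cset sigma (tau i).
    by apply/setP => j; rewrite !inE.
  by rewrite card_preimset //; apply: perm_inj.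
- have := card_imset (Aset (sigma^-1)%g (sigma i)) (@perm_inj _ (sigma^-1)%g); rewrite img !card_Aset.
  by move=> [->].
Qed.
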